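(* Assume the two-layer linear setting below, Assumptions (A3) and (A4), $\lambda_1\ge2\lambda_2$, and the learning-rate condition $\eta<\frac{nd}{(d+1)\lambda_1}$. Let $c_5$ be a constant with $0<c_5<\min\{2\beta,\frac{d}{d+1}\}$, and suppose $$m>\frac{3\eta c_2}{\frac{2d}{d+1}-2c_5}\quad\text{and}\quad m>\frac{\eta c_2}{2\beta-c_5}.$$ Then there is a constant $C$, depending only on $c_5$, $\eta$ and $\lambda_1/n$, such that $\|D(t)\|\le C\sqrt{nm}$ for all $t$.
   Context: Two-layer linear setting. Let $m$ be even and let $d,n\ge1$. The data matrix is $X=[x_1,\dots,x_n]\in\mathbb R^{d\times n}$ and the labels are $Y\in\{-1,1\}^n$, so that $\|Y\|=\sqrt n$. The network is $f(x)=\frac1{\sqrt m}A^\top Wx$ with $A\in\mathbb R^m$ and $W\in\mathbb R^{m\times d}$, trained by gradient descent $$A(t+1)=A(t)-\tfrac{2\eta}{n\sqrt m}W(t)XD(t),\qquad W(t+1)=W(t)-\tfrac{2\eta}{n\sqrt m}A(t)D(t)^\top X^\top$$ from the symmetric initialization, which satisfies $W(0)^\top W(0)=\frac md I_d$ and $F(0)=0$. Here $F=\frac1{\sqrt m}X^\top W^\top A$ is the output vector and $D=F-Y$ the residual. Define the Gram matrix $M(t)=\frac{2}{mn}\big(\|A(t)\|^2X^\top X+X^\top W(t)^\top W(t)X\big)$, the sharpness $\Lambda(t)=\lambda_{\max}(M(t))$, and $\Gamma(t)=\frac{2}{mn}\big(X^\top W(t)^\top W(t)X-\frac md X^\top X\big)$.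 $X^\top X$ has eigenvalues $\lambda_1\ge\lambda_2\ge\dots$, and $\lambda_1=\Theta(n)$. (A3): there is a constant $c_2>0$ with $\|\Gamma(t)\|\le c_2/m$ for all $t$. (A4): there is a constant $\beta>0$ with $\Lambda(t)\le\frac4\eta(1-\beta)$ for all $t$. *)

(* Defs.v *)
From HB Require Import structures.
From mathcomp Require Import all_boot all_order all_algebra.
From mathcomp Require Import reals.
Set Implicit Arguments. Unset Strict Implicit. Unset Printing Implicit Defensive.
Import Order.TTheory GRing.Theory Num.Theory.
Local Open Scope ring_scope.

Section TwoLayer.
Variable R : realType.

Definition vnorm (k : nat) (v : 'cV[R]_k) : R := Num.sqrt (\sum_i v i 0 ^+ 2).

(* s is the list of eigenvalues of the square matrix S, with multiplicity,
   sorted in nonincreasing order: s`_0 = lambda_1 >= s`_1 = lambda_2 >= ... *)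
Definition is_spectrum (k : nat) (S : 'M[R]_k) (s : seq R) : Prop :=
  [/\ sorted (fun x y => y <= x) s, size s = k &
      char_poly S = \prod_(x <- s) ('X - x%:P)].

Definition outF (m d n : nat) (X : 'M[R]_(d, n)) (A : 'cV[R]_m)
  (W : 'M[R]_(m, d)) : 'cV[R]_n :=
  (Num.sqrt (m%:R))^-1 *: (X^T *m W^T *m A).

Definition resid (m d n : nat) (X : 'M[R]_(d, n)) (Y : 'cV[R]_n)
  (A : 'cV[R]_m) (W : 'M[R]_(m, d)) : 'cV[R]_n :=
  outF X A W - Y.

Definition gramM (m d n : nat) (X : 'M[R]_(d, n)) (A : 'cV[R]_m)
  (W : 'M[R]_(m, d)) : 'M[R]_n :=
  (2 / (m%:R * n%:R)) *: (vnorm A ^+ 2 *: (X^T *m X) + X^T *m W^T *m W *m X).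

Definition GammaM (m d n : nat) (X : 'M[R]_(d, n)) (W : 'M[R]_(m, d))
  : 'M[R]_n :=
  (2 / (m%:R * n%:R)) *: (X^T *m W^T *m W *m X - (m%:R / d%:R) *: (X^T *m X)).

Definition lam_max (k : nat) (S : 'M[R]_k) (l : R) : Prop :=
  exists s, is_spectrum S s /\ s`_0 = l.

End TwoLayer.

(* Main.v *)
Require Import Defs.
From HB Require Import structures.
From mathcomp Require Import all_boot all_order all_algebra.
From mathcomp Require Import reals.
From mathcomp Require Import complex.
From mathcomp Require Import ring lra.
Import Order.TTheory GRing.Theory Num.Theory.
Local Open Scope ring_scope.
Set Implicit Arguments. Unset Strict Implicit.

Lemma char_poly_conj (F : comNzRingType) k (P' A P : 'M[F]_k) :
  P' *m P = 1%:M -> char_poly (P' *m A *m P) = char_poly A.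
Proof.
move=> PP.
have E : char_poly_mx (P' *m A *m P) =
   map_mx polyC P' *m char_poly_mx A *m map_mx polyC P.
  rewrite /char_poly_mx mulmxBr mulmxBl !map_mxM; congr (_ - _).
  by rewrite mul_mx_scalar -scalemxAl -map_mxM PP map_mx1 scalemx1.
rewrite /char_poly E !det_mulmx mulrAC -det_mulmx -map_mxM PP map_mx1 det1 mul1r.
by [].
Qed.
Section S.
Variable R : realType.
Local Notation C := (R[i]).
Local Notation toC := (real_complex R).
Local Notation cmx M := (map_mx toC M).
Local Notation tc M := (map_mx Num.conj (M^T)).

Lemma sym_diag k (S : 'M[R]_k) : S^T = S ->
  exists (d : 'rV[R]_k) (Q : 'M[C]_k),
    (tc Q) *m Q = 1%:M /\ (cmx S) = (tc Q) *m diag_mx (cmx d) *m Q.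
Proof.
move=> Ssym.
have herm : (cmx S) \is hermsymmx.
  apply: realsym_hermsym.
    by apply/is_hermitianmxP; rewrite expr0 scale1r map_mx_id // map_trmx Ssym.
  by apply/mxOverP => i j; rewrite mxE; apply/complex_realP; eexists.
have /orthomx_spectralP Aeq := hermitian_normalmx herm.
have U := spectral_unitarymx (cmx S).
have dreal := hermitian_spectral_diag_real herm.
exists (map_mx (@complex.Re R) (spectral_diag (cmx S))), (spectralmx (cmx S)).
have UV : invmx (spectralmx (cmx S)) = (tc (spectralmx (cmx S))) by rewrite invmx_unitary.
split.
  by rewrite -UV mulVmx // spectral_unit.
rewrite {1}Aeq UV; congr (_ *m _ *m _); congr diag_mx.
apply/matrixP => i j; rewrite !mxE RRe_real //.
exact: (mxOverP dreal).
Qed.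

Lemma sym_charpoly k (S : 'M[R]_k) (d : 'rV[R]_k) (Q : 'M[C]_k) :
  tc Q *m Q = 1%:M -> cmx S = tc Q *m diag_mx (cmx d) *m Q ->
  char_poly S = \prod_(i < k) ('X - (d 0 i)%:P).
Proof.
move=> QQ Seq.
apply: (@map_poly_inj _ _ toC).
rewrite map_char_poly Seq char_poly_conj // char_poly_trig ?diag_mx_is_trig //.
rewrite rmorph_prod; apply: eq_bigr => i _.
by rewrite /= map_polyXsubC !mxE eqxx mulr1n.
Qed.

Lemma conj_cmx m n (M : 'M[R]_(m, n)) : map_mx Num.conj (cmx M) = cmx M.
Proof.
apply/matrixP => i j; rewrite !mxE; apply: conj_Creal.
by apply/complex_realP; eexists.
Qed.

Lemma rayleigh k (S : 'M[R]_k) (d : 'rV[R]_k) (Q : 'M[C]_k) :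
  tc Q *m Q = 1%:M -> cmx S = tc Q *m diag_mx (cmx d) *m Q ->
  forall L, (forall i, d 0 i <= L) ->
  forall v : 'cV[R]_k, (v^T *m S *m v) 0 0 <= L * (v^T *m v) 0 0.
Proof.
move=> QQ Seq L dL v.
rewrite -lecR rmorphM /=.
have -> : toC ((v^T *m S *m v) 0 0) = (cmx v^T *m cmx S *m cmx v) 0 0.
  by rewrite -!map_mxM [RHS]mxE.
have -> : toC ((v^T *m v) 0 0) = (cmx v^T *m cmx v) 0 0.
  by rewrite -!map_mxM [RHS]mxE.
set w := Q *m cmx v.
have Tv : cmx v^T = tc (cmx v) by rewrite map_trmx conj_cmx.
have Tw : tc w = cmx v^T *m tc Q by rewrite /w trmx_mul map_mxM Tv.
have -> : cmx v^T *m cmx S *m cmx v = tc w *m diag_mx (cmx d) *m w.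
  by rewrite Seq Tw /w !mulmxA.
have -> : cmx v^T *m cmx v = tc w *m w.
  by rewrite Tw /w mulmxA -(mulmxA _ (tc Q)) QQ mulmx1.
rewrite mul_mx_diag !mxE mulr_sumr; apply: ler_sum => j _.
rewrite !mxE -mulrA mulrCA; apply: ler_wpM2r; last by rewrite lecR.
by rewrite mulrC mul_conjC_ge0.
Qed.


Lemma prod_ord_seq k (d : 'rV[R]_k) :
  \prod_(i < k) ('X - (d 0 i)%:P) = \prod_(x <- [seq d 0 i | i <- enum 'I_k]) ('X - x%:P).
Proof. by rewrite big_map big_enum. Qed.

Lemma sorted_head (s : seq R) x : sorted (fun x y => y <= x) s -> x \in s -> x <= s`_0.
Proof.
case: s => [//|a s] /= Hs; rewrite inE => /orP [/eqP -> //|xs].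
have := order_path_min _ Hs => /(_ _)/allP; apply => //.
by move=> p q r qp rq; apply: le_trans rq qp.
Qed.

Lemma exists_spectrum k (S : 'M[R]_k) : S^T = S -> exists s, is_spectrum S s.
Proof.
move=> /sym_diag [d [Q [QQ Seq]]].
exists (sort (fun x y => y <= x) [seq d 0 i | i <- enum 'I_k]); split.
- by apply: sort_sorted => x y; exact: le_total.
- by rewrite size_sort size_map size_enum_ord.
- by rewrite (sym_charpoly QQ Seq) prod_ord_seq; apply: perm_big; rewrite perm_sym perm_sort.
Qed.

Lemma spectrum_rayleigh k (S : 'M[R]_k) s : S^T = S -> is_spectrum S s ->
  forall v : 'cV[R]_k, (v^T *m S *m v) 0 0 <= s`_0 * (v^T *m v) 0 0.
Proof.
move=> /sym_diag [d [Q [QQ Seq]]] [so _ cp].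
apply: (rayleigh QQ Seq) => i; apply: sorted_head => //.
have : root (char_poly S) (d 0 i).
  rewrite (sym_charpoly QQ Seq) prod_ord_seq root_prod_XsubC.
  by apply: map_f; rewrite mem_enum.
by rewrite cp root_prod_XsubC.
Qed.


Lemma dotE p (u v : 'cV[R]_p) : (u^T *m v) 0 0 = \sum_i u i 0 * v i 0.
Proof. by rewrite mxE; apply: eq_bigr => i _; rewrite mxE. Qed.

Lemma dotC p (u v : 'cV[R]_p) : (u^T *m v) 0 0 = (v^T *m u) 0 0.
Proof. by rewrite !dotE; apply: eq_bigr => i _; rewrite mulrC. Qed.

Lemma sq_ge0 p (v : 'cV[R]_p) : 0 <= \sum_i v i 0 ^+ 2.
Proof. by apply: sumr_ge0 => i _; rewrite sqr_ge0. Qed.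

Lemma vn_ge0 p (v : 'cV[R]_p) : 0 <= vnorm v.
Proof. exact: sqrtr_ge0. Qed.

Lemma vn_sq p (v : 'cV[R]_p) : vnorm v ^+ 2 = (v^T *m v) 0 0.
Proof.
rewrite /vnorm sqr_sqrtr ?sq_ge0 // dotE.
by apply: eq_bigr => i _; rewrite expr2.
Qed.

Lemma dot_ge0 p (v : 'cV[R]_p) : 0 <= (v^T *m v) 0 0.
Proof. by rewrite -vn_sq sqr_ge0. Qed.

Lemma vn0 p (u : 'cV[R]_p) : vnorm u = 0 -> forall i, u i 0 = 0.
Proof.
move=> h i; have : \sum_i u i 0 ^+ 2 = 0.
  apply/eqP; rewrite eq_le sq_ge0 andbT -sqrtr_eq0; exact/eqP.
move/psumr_eq0P => /(_ (fun j _ => sqr_ge0 _) i isT) /eqP.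
by rewrite sqrf_eq0 => /eqP.
Qed.

Lemma CS p (u v : 'cV[R]_p) : (u^T *m v) 0 0 <= vnorm u * vnorm v.
Proof.
have [a0|a0] := eqVneq (vnorm u) 0.
  by rewrite a0 mul0r dotE big1 // => i _; rewrite (vn0 a0) mul0r.
have [b0|b0] := eqVneq (vnorm v) 0.
  by rewrite b0 mulr0 dotE big1 // => i _; rewrite (vn0 b0) mulr0.
set a := vnorm u; set b := vnorm v.
have ha : 0 < a by rewrite lt_def a0 vn_ge0.
have hb : 0 < b by rewrite lt_def b0 vn_ge0.
have H : 0 <= \sum_i (b * u i 0 - a * v i 0) ^+ 2 by apply: sumr_ge0 => i _; rewrite sqr_ge0.
have E : \sum_i (b * u i 0 - a * v i 0) ^+ 2 =
   b ^+ 2 * (u^T *m u) 0 0 - 2 * a * b * (u^T *m v) 0 0 + a ^+ 2 * (v^T *m v) 0 0.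
  rewrite !dotE !mulr_sumr -!sumrB -big_split /=; apply: eq_bigr => i _.
  ring.
rewrite E -!vn_sq -/a -/b in H.
have hab : 0 < a * b by rewrite mulr_gt0.
nra.
Qed.

Lemma vn_tri p (x y : 'cV[R]_p) : vnorm (x - y) <= vnorm x + vnorm y.
Proof.
rewrite -(ler_pXn2r (_ : 0 < 2)%N) ?nnegrE ?addr_ge0 ?vn_ge0 //.
have cs := CS x (- y).
have Ey : vnorm (- y) = vnorm y by rewrite /vnorm; congr Num.sqrt; apply: eq_bigr => i _; rewrite mxE sqrrN.
rewrite Ey in cs.
have E : vnorm (x - y) ^+ 2 = vnorm x ^+ 2 + 2 * (x^T *m (- y)) 0 0 + vnorm y ^+ 2.
  rewrite !vn_sq !dotE mulr_sumr -!big_split /=; apply: eq_bigr => i _; rewrite !mxE; ring.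
rewrite E; nra.
Qed.
End S.

Lemma final_ineq (R : realType) (M N Dd l e c2 aa ff ww : R) :
  0 < M -> 0 < N -> 1 <= Dd -> 0 < l -> 0 < e -> 0 < c2 -> 0 <= aa -> 0 <= ff ->
  ff ^+ 2 <= ww * aa -> ww <= (c2 * N / 2 + M * l / Dd) * ff ->
  aa * l * e <= 2 * M * N -> e * c2 <= M ->
  ff / M <= (2 / e + 1 / (e ^+ 2 * (l / N))) * (N * M).
Proof.
move=> hM hN hD hl he hc ha hf h1 h2 h3 h4.
have hD0 : 0 < Dd by lra.
have hl' : 0 <= l by lra. have he' : 0 <= e by lra. have hc' : 0 <= c2 by lra.
have hM' : 0 <= M by lra. have hN' : 0 <= N by lra.
have h5 : M * l / Dd <= M * l.
  by rewrite ler_pdivrMr // ler_peMr // mulr_ge0 // ltW.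
have h6 : ff <= aa * (c2 * N / 2 + M * l / Dd).
  have [->|fp] := eqVneq ff 0.
    by rewrite mulr_ge0 // addr_ge0 // ?divr_ge0 ?mulr_ge0 // ltW.
  have fp' : 0 < ff by rewrite lt_def fp hf.
  have : ff * ff <= ff * (aa * (c2 * N / 2 + M * l / Dd)).
    rewrite -expr2; apply: (le_trans h1).
    rewrite mulrCA mulrC; apply: ler_wpM2l => //; by rewrite mulrC.
  by rewrite ler_pM2l.
have h7 : ff <= aa * c2 * N / 2 + aa * M * l.
  apply: (le_trans h6); rewrite mulrDr; apply: lerD; first by rewrite !mulrA.
  rewrite -(mulrA aa M l); by apply: ler_wpM2l.
have p1 : (aa * l * e) * (e * c2) <= (2 * M * N) * M.
  by apply: ler_pM => //; rewrite !mulr_ge0.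
have p2 : (aa * l * e) * (M * e * l) <= (2 * M * N) * (M * e * l).
  by apply: ler_wpM2r => //; rewrite !mulr_ge0.
have key : ff * (e ^+ 2 * l) <= 2 * N * M ^+ 2 * e * l + N ^+ 2 * M ^+ 2.
  have : ff * (e ^+ 2 * l) <= (aa * c2 * N / 2 + aa * M * l) * (e ^+ 2 * l).
    by apply: ler_wpM2r => //; rewrite mulr_ge0 ?sqr_ge0.
  move=> /le_trans; apply.
  have -> : (aa * c2 * N / 2 + aa * M * l) * (e ^+ 2 * l) =
    (aa * l * e) * (e * c2) * (N / 2) + (aa * l * e) * (M * e * l) by ring.
  have -> : 2 * N * M ^+ 2 * e * l + N ^+ 2 * M ^+ 2 =
    (2 * M * N) * M * (N / 2) + (2 * M * N) * (M * e * l).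
    by field.
  by apply: lerD => //; apply: ler_wpM2r => //; rewrite divr_ge0 // ler0n.
have EQ : (2 / e + 1 / (e ^+ 2 * (l / N))) * (N * M) =
   (2 * N * M ^+ 2 * e * l + N ^+ 2 * M ^+ 2) / (e ^+ 2 * l) / M.
  by field; rewrite ?gt_eqF // ?mulr_gt0 ?exprn_gt0.
rewrite EQ.
rewrite ler_pM2r ?invr_gt0 // ler_pdivlMr ?mulr_gt0 ?exprn_gt0 //.
Qed.

Unset Implicit Arguments. Set Strict Implicit.

Theorem mainTheorem7 (R : realType) :
  exists C : R -> R -> R -> R,
  forall (m d n : nat) (X : 'M[R]_(d, n)) (Y : 'cV[R]_n)
    (A : nat -> 'cV[R]_m) (W : nat -> 'M[R]_(m, d))
    (eta beta c2 c5 : R) (lam : seq R),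
  ~~ odd m -> (0 < d)%N -> (0 < n)%N ->
  (forall i, Y i 0 = 1 \/ Y i 0 = -1) ->
  0 < eta ->
  (* gradient descent *)
  (forall t, A t.+1 = A t - (2 * eta / (n%:R * Num.sqrt m%:R)) *:
                        (W t *m X *m resid X Y (A t) (W t))) ->
  (forall t, W t.+1 = W t - (2 * eta / (n%:R * Num.sqrt m%:R)) *:
                        (A t *m (resid X Y (A t) (W t))^T *m X^T)) ->
  (* symmetric initialization *)
  (W 0)^T *m W 0 = (m%:R / d%:R)%:M ->
  outF X (A 0) (W 0) = 0 ->
  (* eigenvalues of X^T X, sorted nonincreasingly: lam`_0 = lambda_1, lam`_1 = lambda_2 *)
  is_spectrum (X^T *m X) lam ->
  (* (A3) *)
  0 < c2 ->
  (forall t (v : 'cV[R]_n), vnorm (GammaM X (W t) *m v) <= c2 / m%:R * vnorm v) ->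
  (* (A4) *)
  0 < beta ->
  (forall t l, lam_max (gramM X (A t) (W t)) l -> l <= 4 / eta * (1 - beta)) ->
  2 * lam`_1 <= lam`_0 ->
  eta < n%:R * d%:R / ((d%:R + 1) * lam`_0) ->
  0 < c5 -> c5 < Num.min (2 * beta) (d%:R / (d%:R + 1)) ->
  m%:R > 3 * eta * c2 / (2 * d%:R / (d%:R + 1) - 2 * c5) ->
  m%:R > eta * c2 / (2 * beta - c5) ->
  forall t, vnorm (resid X Y (A t) (W t)) <= C c5 eta (lam`_0 / n%:R) * Num.sqrt (n%:R * m%:R).
Proof.
exists (fun _ e r => Num.sqrt (2 / e + 1 / (e ^+ 2 * r)) + 1).
move=> m d n X Y A W eta beta c2 c5 lam _ d0 n0 Yh e0 _ _ _ _ spec c20 A3 b0 A4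
  _ etah c50 c5h mh1 mh2 t.
set a := A t; set Wt := W t.
set M := (m%:R : R); set N := (n%:R : R); set Dd := (d%:R : R); set l := lam`_0.
have hN : 0 < N by rewrite ltr0n.
have hD : 1 <= Dd by rewrite ler1n.
have hl : 0 < l.
  rewrite ltNge; apply/negP => hl.
  have : n%:R * d%:R / ((d%:R + 1) * l) <= 0 :> R.
    apply: mulr_ge0_le0; first by rewrite mulr_ge0 ?ler0n.
    by rewrite invr_le0 mulr_ge0_le0 // addr_ge0 ?ler0n.
  lra.
have den0 : 0 < 2 * Dd / (Dd + 1) - 2 * c5.
  move: c5h; rewrite lt_min => /andP [_ h].
  have -> : 2 * Dd / (Dd + 1) = 2 * (Dd / (Dd + 1)) by rewrite mulrA.
  lra.
have den2 : 2 * Dd / (Dd + 1) - 2 * c5 <= 2.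
  have : Dd / (Dd + 1) <= 1 by rewrite ler_pdivrMr ?mulr1; lra.
  have -> : 2 * Dd / (Dd + 1) = 2 * (Dd / (Dd + 1)) by rewrite mulrA.
  lra.
set den := 2 * Dd / (Dd + 1) - 2 * c5 in den0 den2 mh1.
have hM : 0 < M.
  apply: lt_trans mh1; rewrite divr_gt0 // !mulr_gt0 //.
have hec : eta * c2 <= M.
  set x := 3 * eta * c2 / den in mh1.
  have hx : den * x = 3 * eta * c2 by rewrite /x mulrC divfK // gt_eqF.
  have x0 : 0 <= x by rewrite /x divr_ge0 // ltW // !mulr_gt0.
  have : den * x <= 2 * x by apply: ler_wpM2r.
  have : 0 < eta * c2 by rewrite mulr_gt0.
  nra.
set K := X^T *m X.
have KT : K^T = K by rewrite /K trmx_mul trmxK.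
have rayK : forall v : 'cV[R]_n, (v^T *m K *m v) 0 0 <= l * (v^T *m v) 0 0.
  exact: spectrum_rayleigh KT spec.
have [u u0 Ku] : exists2 u : 'cV[R]_n, 0 < (u^T *m u) 0 0 & K *m u = l *: u.
  have : root (char_poly K) l.
    case: spec => _ sz ->; rewrite root_prod_XsubC /l mem_nth //.
    by rewrite sz.
  rewrite -eigenvalue_root_char => /eigenvalueP [v vK v0].
  exists v^T; last by rewrite -{1}KT -trmx_mul vK linearZ.
  rewrite lt_def dot_ge0 andbT; apply/negP => /eqP h.
  have : vnorm v^T = 0 by apply/eqP; rewrite -sqrf_eq0 vn_sq h.
  move=> /vn0 hv; move/negP: v0; apply; apply/eqP/matrixP => i j.
  by rewrite !mxE (ord1 i) -(hv j) mxE.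
set G := X^T *m Wt^T *m Wt *m X.
set aa := vnorm a ^+ 2.
have aa0 : 0 <= aa by rewrite sqr_ge0.
have GT : G^T = G by rewrite /G !trmx_mul !trmxK !mulmxA.
set c := 2 / (M * N).
have c0 : 0 < c by rewrite divr_gt0 // mulr_gt0.
have gE : gramM X a Wt = c *: (aa *: K + G) by [].
have quad : forall (x : R) (P Q : 'M[R]_n) (v : 'cV[R]_n),
    (v^T *m (c *: (x *: P + Q)) *m v) 0 0 =
    c * (x * (v^T *m P *m v) 0 0 + (v^T *m Q *m v) 0 0).
  move=> x P Q v.
  by rewrite -scalemxAr -scalemxAl mulmxDr mulmxDl -scalemxAr -scalemxAl !mxE.
have Gpsd : forall v : 'cV[R]_n, 0 <= (v^T *m G *m v) 0 0.
  move=> v; have -> : v^T *m G *m v = (Wt *m X *m v)^T *m (Wt *m X *m v).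
    by rewrite /G !trmx_mul !mulmxA.
  exact: dot_ge0.
have gT : (gramM X a Wt)^T = gramM X a Wt.
  by rewrite gE !linearZ /= linearD /= linearZ /= KT GT.
have [s hs] := exists_spectrum gT.
have s0 := A4 t s`_0 (ex_intro _ s (conj hs erefl)).
have ray := spectrum_rayleigh gT hs u.
rewrite gE quad -mulmxA Ku -scalemxAr mxE in ray.
have hal : aa * l * eta <= 2 * M * N.
  have uu0 := u0.
  set uu := (u^T *m u) 0 0 in uu0 ray.
  set g := (u^T *m G *m u) 0 0 in ray.
  have g0 : 0 <= g by apply: Gpsd.
  have h1 : c * (aa * l) * uu <= 4 / eta * uu.
    apply: le_trans (_ : c * (aa * (l * uu) + g) <= _).
      rewrite -[c * _ * uu]mulrA -[aa * l * uu]mulrA; apply: ler_wpM2l; [exact: ltW| by rewrite lerDl].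
    apply: (le_trans ray); apply: ler_wpM2r; first exact: ltW.
    apply: (le_trans s0); rewrite ger_pMr ?divr_gt0 //; lra.
  have h2 : c * (aa * l) <= 4 / eta by rewrite -(ler_pM2r uu0).
  have -> : aa * l * eta = c * (aa * l) * (eta * M * N / 2).
    by rewrite /c; field; rewrite ?gt_eqF.
  have -> : 2 * M * N = 4 / eta * (eta * M * N / 2).
    by field; rewrite ?gt_eqF.
  by apply: ler_wpM2r => //; rewrite divr_ge0 // !mulr_ge0 // ltW.
set f := X^T *m Wt^T *m a.
set ff := (f^T *m f) 0 0.
have ff0 : 0 <= ff by apply: dot_ge0.
set wf := Wt *m X *m f.
have ffle : ff <= vnorm wf * vnorm a.
  have -> : ff = (wf^T *m a) 0 0 by rewrite /ff /f /wf !trmx_mul !mulmxA.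
  exact: CS.
set ww := vnorm wf ^+ 2.
have wwE : ww = (f^T *m G *m f) 0 0.
  by rewrite /ww vn_sq /wf /G !trmx_mul !mulmxA.
have h1 : ff ^+ 2 <= ww * aa.
  rewrite /ww /aa -exprMn ler_pXn2r // ?nnegrE //.
  by rewrite mulr_ge0 // vn_ge0.
have gam : (f^T *m GammaM X Wt *m f) 0 0 <= c2 / M * ff.
  rewrite -mulmxA; apply: (le_trans (CS _ _)).
  have := A3 t f; rewrite -/M -/Wt => hA.
  apply: le_trans (_ : vnorm f * (c2 / M * vnorm f) <= _).
    by apply: ler_wpM2l; rewrite ?vn_ge0 // -mulmxA.
  by rewrite mulrCA -expr2 vn_sq.
have gamE : (f^T *m GammaM X Wt *m f) 0 0 =
    c * ((f^T *m G *m f) 0 0 - M / Dd * (f^T *m K *m f) 0 0).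
  rewrite /GammaM -/M -/N -/Dd -/c -/G -/K.
  by rewrite -scalemxAr -scalemxAl mulmxBr mulmxBl -scalemxAr -scalemxAl !mxE.
have h2 : ww <= (c2 * N / 2 + M * l / Dd) * ff.
  have fK := rayK f.
  rewrite gamE in gam.
  have : (f^T *m G *m f) 0 0 - M / Dd * (f^T *m K *m f) 0 0 <= c2 / M * ff / c.
    by rewrite ler_pdivlMr // mulrC.
  have -> : c2 / M * ff / c = c2 * N / 2 * ff by rewrite /c; field; rewrite ?gt_eqF.
  have : M / Dd * (f^T *m K *m f) 0 0 <= M / Dd * (l * ff).
    by apply: ler_wpM2l => //; rewrite divr_ge0 // ltW // (lt_le_trans _ hD).
  rewrite wwE; lra.
have key := final_ineq hM hN hD hl e0 c20 aa0 ff0 h1 h2 hal hec.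
rewrite /resid; apply: (le_trans (vn_tri _ _)).
set Q := 2 / eta + 1 / (eta ^+ 2 * (l / N)) in key *.
have Q0 : 0 <= Q.
  rewrite /Q; apply: addr_ge0; apply: divr_ge0 => //; try exact: ltW.
  by apply: mulr_ge0; [exact: sqr_ge0 | apply: divr_ge0; exact: ltW].
have M1 : 1 <= M.
  by rewrite /M ler1n; move: hM; rewrite /M ltr0n.
rewrite mulrDl mul1r; apply: lerD.
  rewrite -sqrtrM // /vnorm; apply: ler_wsqrtr.
  apply: le_trans key; rewrite le_eqVlt; apply/orP; left; apply/eqP.
  rewrite /outF -/f /ff dotE mulrC mulr_sumr; apply: eq_bigr => i _.
  by rewrite mxE exprMn exprVn sqr_sqrtr ?ler0n // expr2.
rewrite /vnorm; apply: ler_wsqrtr.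
have -> : \sum_i Y i 0 ^+ 2 = N.
  rewrite (eq_bigr (fun _ => 1)); last by move=> i _; case: (Yh i) => ->; rewrite ?expr1n ?sqrrN ?expr1n.
  by rewrite sumr_const card_ord.
by rewrite ler_peMr // ltW.
Qed.
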